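(* Let $G\neq0$ and $\Lambda\in\mathbb R$, and let $T(U)=2G\log U+\Lambda\,\mathrm{tr}(\log U)\mathbb 1$ on $\mathrm{PSym}(3)$. Then there exists a differentiable function $W:\mathrm{PSym}(3)\to\mathbb R$ with $T(U)=D W(U)$ (i.e. $\langle T(U),H\rangle=DW(U)[H]$ for all $H\in\mathrm{Sym}(3)$) if and only if $\Lambda=0$ (equivalently, Poisson's ratio $\nu=\frac{\Lambda}{2(\Lambda+G)}$ vanishes). In that case, with normalization $W(\mathbb 1)=0$, $$W(U)=2G\big[\langle U,\log U-\mathbb 1\rangle+3\big]=2G\sum_{i=1}^3\lambda_i(\ln\lambda_i-1)+6G,$$ where $\lambda_i$ are the eigenvalues of $U$.
   Context: $\mathrm{Sym}(3)$: real symmetric $3\times3$ matrices; $\mathrm{PSym}(3)$: symmetric positive definite ones; $\mathbb 1$: identity; $\log$: principal matrix logarithm; $\langle X,Y\rangle=\mathrm{tr}(Y^TX)$. *)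

(* Defs.v *)
(* real 3x3 matrices represented as functions nat -> nat -> R,
   only indices 0,1,2 are meaningful. *)
From Stdlib Require Import Reals ClassicalEpsilon.
Open Scope R_scope.

Definition Mat := nat -> nat -> R.

Definition sum3 (f : nat -> R) : R := f 0%nat + f 1%nat + f 2%nat.

Definition meq (A B : Mat) : Prop :=
  forall i j, (i < 3)%nat -> (j < 3)%nat -> A i j = B i j.

Definition mmul (A B : Mat) : Mat := fun i j => sum3 (fun k => A i k * B k j).
Definition transp (A : Mat) : Mat := fun i j => A j i.
Definition madd (A B : Mat) : Mat := fun i j => A i j + B i j.
Definition id3 : Mat := fun i j => if Nat.eqb i j then 1 else 0.
Definition diag3 (l : nat -> R) : Mat := fun i j => if Nat.eqb i j then l i else 0.
Definition mtr (A : Mat) : R := sum3 (fun i => A i i).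

Definition inner (X Y : Mat) : R := mtr (mmul (transp Y) X).
Definition fnorm (H : Mat) : R := sqrt (inner H H).

Definition sym (A : Mat) : Prop :=
  forall i j, (i < 3)%nat -> (j < 3)%nat -> A i j = A j i.
Definition psym (A : Mat) : Prop :=
  sym A /\
  forall x : nat -> R, ~ (x 0%nat = 0 /\ x 1%nat = 0 /\ x 2%nat = 0) ->
    0 < sum3 (fun i => sum3 (fun j => x i * A i j * x j)).

Definition orth (Q : Mat) : Prop := meq (mmul (transp Q) Q) id3.

Definition spectral (U Q : Mat) (l : nat -> R) : Prop :=
  orth Q /\ (forall i, (i < 3)%nat -> 0 < l i) /\
  meq U (mmul (mmul Q (diag3 l)) (transp Q)).

Definition is_mlog (U L : Mat) : Prop :=
  exists Q l, spectral U Q l /\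
    meq L (mmul (mmul Q (diag3 (fun i => ln (l i)))) (transp Q)).

Definition mlog (U : Mat) : Mat :=
  epsilon (inhabits (fun _ _ => 0)) (fun L => is_mlog U L).

Definition Tmap (G Lam : R) (U : Mat) : Mat :=
  fun i j => 2 * G * mlog U i j + Lam * mtr (mlog U) * id3 i j.

Definition has_sym_deriv (W : Mat -> R) (U T : Mat) : Prop :=
  forall eps, 0 < eps -> exists delta, 0 < delta /\
    forall H, sym H -> psym (madd U H) -> fnorm H < delta ->
      Rabs (W (madd U H) - W U - inner T H) <= eps * fnorm H.

(* Main.v *)
Require Import Defs.
From Stdlib Require Import Reals Lra Lia Psatz FunctionalExtensionality ClassicalEpsilon Classical.
Open Scope R_scope.

Ltac idx3 := let i := fresh "i" in let j := fresh "j" in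
  let Hi := fresh in let Hj := fresh in
  intros i j Hi Hj;
  destruct i as [|[|[|i]]]; [| | | exfalso; lia];
  (destruct j as [|[|[|j]]]; [| | | exfalso; lia]).

Lemma mmul_assoc A B C : mmul (mmul A B) C = mmul A (mmul B C).
Proof. extensionality i; extensionality j; unfold mmul, sum3; ring. Qed.

Lemma transp_mmul A B : transp (mmul A B) = mmul (transp B) (transp A).
Proof. extensionality i; extensionality j; unfold transp, mmul, sum3; ring. Qed.

Lemma transp_transp A : transp (transp A) = A.
Proof. reflexivity. Qed.

Lemma meq_refl A : meq A A. Proof. intros i j _ _; reflexivity. Qed.
Lemma meq_sym A B : meq A B -> meq B A. Proof. intros H i j Hi Hj; symmetry; auto. Qed.
Lemma meq_trans A B C : meq A B -> meq B C -> meq A C.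
Proof. intros H1 H2 i j Hi Hj; rewrite H1; auto. Qed.

Lemma mmul_meq A A' B B' : meq A A' -> meq B B' -> meq (mmul A B) (mmul A' B').
Proof.
  intros HA HB i j Hi Hj; unfold mmul, sum3.
  rewrite (HA i 0%nat), (HA i 1%nat), (HA i 2%nat), (HB 0%nat j), (HB 1%nat j), (HB 2%nat j);
  auto; lia.
Qed.

Lemma transp_meq A A' : meq A A' -> meq (transp A) (transp A').
Proof. intros H i j Hi Hj; unfold transp; auto. Qed.

Lemma mmul_id_l A : meq (mmul id3 A) A.
Proof. idx3; unfold mmul, sum3, id3; simpl; ring. Qed.
Lemma mmul_id_r A : meq (mmul A id3) A.
Proof. idx3; unfold mmul, sum3, id3; simpl; ring. Qed.

Lemma sumsq0_9 (a b c d e f g h k : R) :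
  a^2+b^2+c^2+d^2+e^2+f^2+g^2+h^2+k^2 = 0 ->
  a = 0 /\ b = 0 /\ c = 0 /\ d = 0 /\ e = 0 /\ f = 0 /\ g = 0 /\ h = 0 /\ k = 0.
Proof.
  intros H.
  assert (a^2 = 0 /\ b^2 = 0 /\ c^2 = 0 /\ d^2 = 0 /\ e^2 = 0 /\ f^2 = 0 /\ g^2 = 0 /\ h^2 = 0 /\ k^2 = 0) as [? [? [? [? [? [? [? [? ?]]]]]]]].
  { pose proof (pow2_ge_0 a); pose proof (pow2_ge_0 b); pose proof (pow2_ge_0 c);
    pose proof (pow2_ge_0 d); pose proof (pow2_ge_0 e); pose proof (pow2_ge_0 f);
    pose proof (pow2_ge_0 g); pose proof (pow2_ge_0 h); pose proof (pow2_ge_0 k).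
    repeat split; lra. }
  repeat split; (apply (Rsqr_0_uniq); unfold Rsqr; lra).
Qed.

Lemma orth_rinv Q : orth Q -> meq (mmul Q (transp Q)) id3.
Proof.
  intros H.
  set (s := fun a b => Q 0%nat a * Q 0%nat b + Q 1%nat a * Q 1%nat b + Q 2%nat a * Q 2%nat b).
  set (p := fun a b => Q a 0%nat * Q b 0%nat + Q a 1%nat * Q b 1%nat + Q a 2%nat * Q b 2%nat).
  assert (h00 : s 0%nat 0%nat = 1) by exact (H 0%nat 0%nat ltac:(lia) ltac:(lia)).
  assert (h01 : s 0%nat 1%nat = 0) by exact (H 0%nat 1%nat ltac:(lia) ltac:(lia)).
  assert (h02 : s 0%nat 2%nat = 0) by exact (H 0%nat 2%nat ltac:(lia) ltac:(lia)).
  assert (h10 : s 1%nat 0%nat = 0) by exact (H 1%nat 0%nat ltac:(lia) ltac:(lia)).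
  assert (h11 : s 1%nat 1%nat = 1) by exact (H 1%nat 1%nat ltac:(lia) ltac:(lia)).
  assert (h12 : s 1%nat 2%nat = 0) by exact (H 1%nat 2%nat ltac:(lia) ltac:(lia)).
  assert (h20 : s 2%nat 0%nat = 0) by exact (H 2%nat 0%nat ltac:(lia) ltac:(lia)).
  assert (h21 : s 2%nat 1%nat = 0) by exact (H 2%nat 1%nat ltac:(lia) ltac:(lia)).
  assert (h22 : s 2%nat 2%nat = 1) by exact (H 2%nat 2%nat ltac:(lia) ltac:(lia)).
  assert (E : (1 - p 0%nat 0%nat)^2 + (p 0%nat 1%nat)^2 + (p 0%nat 2%nat)^2 + (p 1%nat 0%nat)^2 + (1 - p 1%nat 1%nat)^2
    + (p 1%nat 2%nat)^2 + (p 2%nat 0%nat)^2 + (p 2%nat 1%nat)^2 + (1 - p 2%nat 2%nat)^2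
    = (s 0%nat 0%nat - 1)^2 + (s 0%nat 1%nat)^2 + (s 0%nat 2%nat)^2 + (s 1%nat 0%nat)^2 + (s 1%nat 1%nat - 1)^2
    + (s 1%nat 2%nat)^2 + (s 2%nat 0%nat)^2 + (s 2%nat 1%nat)^2 + (s 2%nat 2%nat - 1)^2)
    by (unfold s, p; ring).
  rewrite h00, h01, h02, h10, h11, h12, h20, h21, h22 in E.
  match type of E with ?L = _ => assert (E2 : L = 0) by (rewrite E; ring) end; apply sumsq0_9 in E2; clear E; rename E2 into E.
  destruct E as [e00 [e01 [e02 [e10 [e11 [e12 [e20 [e21 e22]]]]]]]].
  idx3; unfold mmul, transp, sum3, id3; simpl; unfold p in *; lra.
Qed.

Lemma mmul_diag_l d A i j : (i < 3)%nat -> mmul (diag3 d) A i j = d i * A i j.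
Proof. intros Hi; destruct i as [|[|[|i]]]; [| | |lia]; unfold mmul, sum3, diag3; simpl; ring. Qed.
Lemma mmul_diag_r d A i j : (j < 3)%nat -> mmul A (diag3 d) i j = A i j * d j.
Proof. intros Hj; destruct j as [|[|[|j]]]; [| | |lia]; unfold mmul, sum3, diag3; simpl; ring. Qed.

Lemma orth_inv Q : orth Q -> meq (mmul (transp Q) Q) id3.
Proof. auto. Qed.

Lemma meq_mmul_l A B C : meq B C -> meq (mmul A B) (mmul A C).
Proof. intros; apply mmul_meq; [apply meq_refl|auto]. Qed.
Lemma meq_mmul_r A B C : meq B C -> meq (mmul B A) (mmul C A).
Proof. intros; apply mmul_meq; [auto|apply meq_refl]. Qed.

Lemma cancel_l Q X : orth Q -> meq (mmul (transp Q) (mmul Q X)) X.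
Proof.
  intros H. rewrite <- mmul_assoc. eapply meq_trans; [apply meq_mmul_r; exact H|apply mmul_id_l].
Qed.
Lemma cancel_l' Q X : orth Q -> meq (mmul Q (mmul (transp Q) X)) X.
Proof.
  intros H. rewrite <- mmul_assoc. eapply meq_trans; [apply meq_mmul_r; apply orth_rinv; exact H|apply mmul_id_l].
Qed.
Lemma cancel_r Q X : orth Q -> meq (mmul (mmul X Q) (transp Q)) X.
Proof.
  intros H. rewrite mmul_assoc. eapply meq_trans; [apply meq_mmul_l; apply orth_rinv; exact H|apply mmul_id_r].
Qed.
Lemma cancel_r' Q X : orth Q -> meq (mmul (mmul X (transp Q)) Q) X.
Proof.
  intros H. rewrite mmul_assoc. eapply meq_trans; [apply meq_mmul_l; exact H|apply mmul_id_r].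
Qed.

Lemma spectral_conj U Q l : spectral U Q l -> meq (mmul (mmul (transp Q) U) Q) (diag3 l).
Proof.
  intros [HQ [_ HU]].
  eapply meq_trans. { apply meq_mmul_r; apply meq_mmul_l; exact HU. }
  rewrite !mmul_assoc.
  eapply meq_trans. { apply cancel_l; exact HQ. }
  eapply meq_trans. { apply meq_mmul_l; exact HQ. }
  apply mmul_id_r.
Qed.

Lemma log_unique_gen (f : R -> R) U Q0 l0 Q l :
  spectral U Q0 l0 -> spectral U Q l ->
  meq (mmul (mmul Q0 (diag3 (fun i => f (l0 i)))) (transp Q0))
      (mmul (mmul Q (diag3 (fun i => f (l i)))) (transp Q)).
Proof.
  intros S0 S. pose proof S0 as [HQ0 [_ HU0]]. pose proof S as [HQ [_ HU]].
  set (R0 := mmul (transp Q0) Q).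
  assert (E1 : meq (mmul (mmul (transp Q0) U) Q) (mmul (diag3 l0) R0)).
  { eapply meq_trans. { apply meq_mmul_r; apply meq_mmul_l; exact HU0. }
    unfold R0. rewrite !mmul_assoc.
    eapply meq_trans. { apply cancel_l; exact HQ0. }
    apply meq_refl. }
  assert (E2 : meq (mmul (mmul (transp Q0) U) Q) (mmul R0 (diag3 l))).
  { eapply meq_trans. { apply meq_mmul_r; apply meq_mmul_l; exact HU. }
    unfold R0. rewrite !mmul_assoc. apply meq_mmul_l. apply meq_mmul_l.
    eapply meq_trans; [apply meq_mmul_l; exact HQ | apply mmul_id_r]. }
  assert (E3 : meq (mmul (diag3 (fun i => f (l0 i))) R0) (mmul R0 (diag3 (fun i => f (l i))))).
  { intros i j Hi Hj. rewrite mmul_diag_l, mmul_diag_r by auto.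
    pose proof (meq_trans _ _ _ (meq_sym _ _ E1) E2 i j Hi Hj) as E.
    rewrite mmul_diag_l, mmul_diag_r in E by auto.
    destruct (Req_dec (R0 i j) 0) as [Z|NZ].
    - rewrite Z; ring.
    - assert (l0 i = l j) by (apply (Rmult_eq_reg_r (R0 i j)); [lra|auto]).
      rewrite H; ring. }
  assert (E4 : meq Q (mmul Q0 R0)).
  { apply meq_sym. unfold R0. apply cancel_l'. exact HQ0. }
  assert (E5 : meq (mmul R0 (transp R0)) id3).
  { unfold R0. rewrite transp_mmul, transp_transp, !mmul_assoc.
    eapply meq_trans. { apply meq_mmul_l. rewrite <- mmul_assoc. apply meq_mmul_r. apply orth_rinv; exact HQ. }
    eapply meq_trans. { apply meq_mmul_l. apply mmul_id_l. }
    exact HQ0. }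
  apply meq_sym.
  eapply meq_trans. { apply mmul_meq; [apply meq_mmul_r; exact E4 | apply transp_meq; exact E4]. }
  rewrite transp_mmul.
  rewrite !mmul_assoc. apply meq_mmul_l.
  rewrite <- !mmul_assoc.
  eapply meq_trans. { apply meq_mmul_r. apply meq_mmul_r. apply meq_sym. exact E3. }
  rewrite !mmul_assoc. apply meq_mmul_l.
  rewrite <- !mmul_assoc.
  eapply meq_trans. { apply meq_mmul_r. exact E5. }
  apply mmul_id_l.
Qed.

Lemma mlog_spec U Q l : spectral U Q l ->
  meq (mlog U) (mmul (mmul Q (diag3 (fun i => ln (l i)))) (transp Q)).
Proof.
  intros S. unfold mlog.
  destruct (epsilon_spec (inhabits (fun _ _ => 0)) (fun L => is_mlog U L)) as [Q' [l' [S' HL]]].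
  { exists (mmul (mmul Q (diag3 (fun i => ln (l i)))) (transp Q)), Q, l. split; auto. apply meq_refl. }
  eapply meq_trans; [exact HL|].
  apply (log_unique_gen ln U Q' l' Q l); auto.
Qed.

Definition sdiag (Q : Mat) (a : nat -> R) : Mat := mmul (mmul Q (diag3 a)) (transp Q).

Lemma inner_meq X X' Y Y' : meq X X' -> meq Y Y' -> inner X Y = inner X' Y'.
Proof.
  intros HX HY. unfold inner, mtr, mmul, transp, sum3.
  repeat rewrite HX by lia. repeat rewrite HY by lia. reflexivity.
Qed.

Lemma inner_spec P a Q b :
  inner (sdiag P a) (sdiag Q b) =
  sum3 (fun i => sum3 (fun j => a i * b j * (mmul (transp P) Q i j)^2)).
Proof. unfold sdiag, inner, mtr, mmul, transp, diag3, sum3; simpl; ring. Qed.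

Lemma orth_entry Q i j : orth Q -> (i < 3)%nat -> (j < 3)%nat ->
  mmul (transp Q) Q i j = id3 i j.
Proof. intros H Hi Hj; apply H; auto. Qed.

Lemma inner_spec_same P a b : orth P ->
  inner (sdiag P a) (sdiag P b) = sum3 (fun i => a i * b i).
Proof.
  intros H. rewrite inner_spec. unfold sum3.
  repeat rewrite (orth_entry P) by (auto; lia). unfold id3; simpl; ring.
Qed.

Lemma mlog_sdiag U Q l : spectral U Q l -> meq (mlog U) (sdiag Q (fun i => ln (l i))).
Proof. apply mlog_spec. Qed.

Lemma id3_sdiag Q : orth Q -> meq id3 (sdiag Q (fun _ => 1)).
Proof.
  intros H. apply meq_sym. unfold sdiag.
  eapply meq_trans; [|apply orth_rinv; exact H].
  apply meq_mmul_r. eapply meq_trans; [apply meq_mmul_l|apply mmul_id_r].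
  intros i j Hi Hj; unfold diag3, id3; destruct (Nat.eqb i j); reflexivity.
Qed.

Lemma sdiag_minus Q a b : (fun i j => sdiag Q a i j - sdiag Q b i j) = sdiag Q (fun k => a k - b k).
Proof.
  extensionality i; extensionality j. unfold sdiag, mmul, diag3, transp, sum3; simpl; ring.
Qed.

Lemma W0_val U Q l : spectral U Q l ->
  inner U (fun i j => mlog U i j - id3 i j) = sum3 (fun i => l i * (ln (l i) - 1)).
Proof.
  intros S. pose proof S as [HQ [_ HU]].
  rewrite (inner_meq U (sdiag Q l) _ (sdiag Q (fun k => ln (l k) - 1))).
  - apply inner_spec_same; auto.
  - exact HU.
  - rewrite <- sdiag_minus. intros i j Hi Hj.
    rewrite (mlog_sdiag U Q l S) by auto. rewrite (id3_sdiag Q HQ) by auto. reflexivity.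
Qed.

Lemma W2_colsum P Q j : orth P -> orth Q -> (j < 3)%nat ->
  sum3 (fun i => (mmul (transp P) Q i j)^2) = 1.
Proof.
  intros HP HQ Hj.
  set (R0 := mmul (transp P) Q).
  assert (E : meq (mmul (transp R0) R0) id3).
  { unfold R0. rewrite transp_mmul, transp_transp, !mmul_assoc.
    eapply meq_trans. { apply meq_mmul_l. rewrite <- mmul_assoc. apply meq_mmul_r. apply orth_rinv; exact HP. }
    eapply meq_trans. { apply meq_mmul_l. apply mmul_id_l. }
    exact HQ. }
  pose proof (E j j Hj Hj) as E'. unfold mmul at 1, transp at 1, sum3 in E'. unfold sum3.
  unfold id3 in E'. rewrite Nat.eqb_refl in E'. simpl. lra.
Qed.

Lemma W2_rowsum P Q i : orth P -> orth Q -> (i < 3)%nat ->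
  sum3 (fun j => (mmul (transp P) Q i j)^2) = 1.
Proof.
  intros HP HQ Hi.
  set (R0 := mmul (transp P) Q).
  assert (E : meq (mmul R0 (transp R0)) id3).
  { unfold R0. rewrite transp_mmul, transp_transp, !mmul_assoc.
    eapply meq_trans. { apply meq_mmul_l. rewrite <- mmul_assoc. apply meq_mmul_r. apply orth_rinv; exact HQ. }
    eapply meq_trans. { apply meq_mmul_l. apply mmul_id_l. }
    exact HP. }
  pose proof (E i i Hi Hi) as E'. unfold mmul at 1, transp at 1, sum3 in E'. unfold sum3.
  unfold id3 in E'. rewrite Nat.eqb_refl in E'. simpl. lra.
Qed.

Lemma ln_diff_le a b : 0 < a -> 0 < b -> ln a - ln b <= a / b - 1.
Proof.
  intros Ha Hb.
  assert (E : ln (a / b) = ln a - ln b).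
  { unfold Rdiv. rewrite ln_mult, ln_Rinv; try lra; try (apply Rinv_0_lt_compat; lra). }
  pose proof (exp_ineq1_le (ln (a / b))). rewrite exp_ln in H.
  - lra.
  - apply Rdiv_lt_0_compat; auto.
Qed.

Lemma g_bounds u v m : 0 < m -> m <= u -> m <= v ->
  0 <= v * ln v - v * ln u - v + u <= (v - u)^2 / m.
Proof.
  intros Hm Hu Hv.
  pose proof (ln_diff_le u v ltac:(lra) ltac:(lra)) as H1.
  pose proof (ln_diff_le v u ltac:(lra) ltac:(lra)) as H2.
  remember (ln v - ln u) as t eqn:Ht.
  assert (H1' : v * (- t) <= u - v).
  { replace (u - v) with (v * (u / v - 1)) by (field; lra).
    apply Rmult_le_compat_l; lra. }
  assert (H2' : u * t <= v - u).
  { replace (v - u) with (u * (v / u - 1)) by (field; lra).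
    apply Rmult_le_compat_l; lra. }
  split.
  - replace (v * ln v - v * ln u - v + u) with (v * t - v + u) by (rewrite Ht; ring). lra.
  - replace (v * ln v - v * ln u - v + u) with (v * t - v + u) by (rewrite Ht; ring).
    assert (K : (v - u) * t <= (v - u)^2 / m).
    { destruct (Rle_lt_dec u v).
      - assert (t <= (v - u) / m).
        { apply Rle_trans with ((v-u)/u).
          + apply (Rmult_le_reg_l u); [lra|]. replace (u * ((v-u)/u)) with (v-u) by (field; lra). lra.
          + unfold Rdiv. apply Rmult_le_compat_l; [lra|]. apply Rinv_le_contravar; lra. }
        replace ((v - u)^2/m) with ((v-u)*((v-u)/m)) by (field; lra).
        apply Rmult_le_compat_l; lra.
      - assert (- t <= (u - v) / m).
        { apply Rle_trans with ((u-v)/v).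
          + apply (Rmult_le_reg_l v); [lra|]. replace (v * ((u-v)/v)) with (u-v) by (field; lra). lra.
          + unfold Rdiv. apply Rmult_le_compat_l; [lra|]. apply Rinv_le_contravar; lra. }
        replace ((v - u)^2/m) with ((u-v)*((u-v)/m)) by (field; lra).
        replace ((v-u)*t) with ((u-v)*(-t)) by ring.
        apply Rmult_le_compat_l; lra. }
    nra.
Qed.

Lemma sum_ident (w : nat -> nat -> R) (u v L M : nat -> R) :
  sum3 (fun i => w i 0%nat) = 1 -> sum3 (fun i => w i 1%nat) = 1 -> sum3 (fun i => w i 2%nat) = 1 ->
  sum3 (fun j => w 0%nat j) = 1 -> sum3 (fun j => w 1%nat j) = 1 ->
  (sum3 (fun i => v i * (M i - 1)) - sum3 (fun i => u i * (L i - 1))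
   - (sum3 (fun i => sum3 (fun j => L i * v j * w i j)) - sum3 (fun i => L i * u i))
   = sum3 (fun i => sum3 (fun j => w i j * (v j * M j - v j * L i - v j + u i))))
  /\
  (sum3 (fun i => v i * v i) - 2 * sum3 (fun i => sum3 (fun j => u i * v j * w i j))
    + sum3 (fun i => u i * u i)
   = sum3 (fun i => sum3 (fun j => w i j * (v j - u i)^2))).
Proof.
  unfold sum3; intros c0 c1 c2 r0 r1.
  assert (E1 : w 2%nat 0%nat = 1 - w 0%nat 0%nat - w 1%nat 0%nat) by lra.
  assert (E2 : w 2%nat 1%nat = 1 - w 0%nat 1%nat - w 1%nat 1%nat) by lra.
  assert (E3 : w 2%nat 2%nat = 1 - w 0%nat 2%nat - w 1%nat 2%nat) by lra.
  assert (E4 : w 0%nat 2%nat = 1 - w 0%nat 0%nat - w 0%nat 1%nat) by lra.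
  assert (E5 : w 1%nat 2%nat = 1 - w 1%nat 0%nat - w 1%nat 1%nat) by lra.
  rewrite E1, E2, E3. rewrite E4, E5. split; ring.
Qed.

Definition wgt (P Q : Mat) i j := (mmul (transp P) Q i j)^2.

Lemma core_ident U V P u Q v : spectral U P u -> spectral V Q v ->
  (inner V (fun i j => mlog V i j - id3 i j) - inner U (fun i j => mlog U i j - id3 i j)
    - (inner (mlog U) V - inner (mlog U) U)
   = sum3 (fun i => sum3 (fun j => wgt P Q i j * (v j * ln (v j) - v j * ln (u i) - v j + u i))))
  /\
  (inner V V - 2 * inner U V + inner U U
   = sum3 (fun i => sum3 (fun j => wgt P Q i j * (v j - u i)^2))).
Proof.
  intros SU SV. pose proof SU as [HP [_ HU]]. pose proof SV as [HQ [_ HV]].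
  rewrite (W0_val U P u SU), (W0_val V Q v SV).
  assert (HL := mlog_sdiag U P u SU).
  rewrite (inner_meq (mlog U) (sdiag P (fun i => ln (u i))) V (sdiag Q v)) by auto.
  rewrite (inner_meq (mlog U) (sdiag P (fun i => ln (u i))) U (sdiag P u)) by auto.
  rewrite (inner_meq V (sdiag Q v) V (sdiag Q v)) by auto.
  rewrite (inner_meq U (sdiag P u) V (sdiag Q v)) by auto.
  rewrite (inner_meq U (sdiag P u) U (sdiag P u)) by auto.
  rewrite inner_spec, !inner_spec_same, inner_spec by auto.
  pose proof (sum_ident (wgt P Q) u v (fun i => ln (u i)) (fun i => ln (v i))) as K.
  unfold wgt in K. rewrite !W2_colsum, !W2_rowsum in K by (auto; lia).
  destruct (K eq_refl eq_refl eq_refl eq_refl eq_refl) as [K1 K2].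
  unfold wgt. split.
  - rewrite <- K1. unfold sum3; ring.
  - rewrite <- K2. unfold sum3; ring.
Qed.

Definition W0 (G : R) (V : Mat) : R := 2 * G * (inner V (fun i j => mlog V i j - id3 i j) + 3).

Lemma inner_self_nonneg H : 0 <= inner H H.
Proof.
  unfold inner, mtr, mmul, transp, sum3.
  assert (forall a b, 0 <= H a b * H a b) by (intros; apply Rle_0_sqr).
  pose proof (H0 0%nat 0%nat); pose proof (H0 0%nat 1%nat); pose proof (H0 0%nat 2%nat);
  pose proof (H0 1%nat 0%nat); pose proof (H0 1%nat 1%nat); pose proof (H0 1%nat 2%nat);
  pose proof (H0 2%nat 0%nat); pose proof (H0 2%nat 1%nat); pose proof (H0 2%nat 2%nat).
  lra.
Qed.

Lemma fnorm_sq H : fnorm H ^ 2 = inner H H.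
Proof. unfold fnorm. rewrite <- Rsqr_pow2. apply Rsqr_sqrt, inner_self_nonneg. Qed.

Lemma fnorm_nonneg H : 0 <= fnorm H.
Proof. apply sqrt_pos. Qed.

Lemma W0_deriv (G : R) (Hex : forall U, psym U -> exists Q l, spectral U Q l) U :
  psym U -> has_sym_deriv (W0 G) U (Tmap G 0 U).
Proof.
  intros pU. destruct (Hex U pU) as [P [u SU]].
  pose proof SU as [HP [Hu HUe]].
  set (um := Rmin (u 0%nat) (Rmin (u 1%nat) (u 2%nat))).
  assert (Hum : 0 < um).
  { unfold um. pose proof (Hu 0%nat ltac:(lia)); pose proof (Hu 1%nat ltac:(lia)); pose proof (Hu 2%nat ltac:(lia)).
    repeat apply Rmin_glb_lt; auto. }
  assert (Humi : forall i, (i < 3)%nat -> um <= u i).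
  { intros i Hi; unfold um; destruct i as [|[|[|i]]]; [| | |lia].
    - apply Rmin_l.
    - eapply Rle_trans; [apply Rmin_r|apply Rmin_l].
    - eapply Rle_trans; [apply Rmin_r|apply Rmin_r]. }
  intros eps Heps.
  exists (Rmin (um / 2) (eps * um / (4 * (Rabs G + 1)))).
  split.
  { apply Rmin_glb_lt; [lra|]. pose proof (Rabs_pos G).
    apply Rdiv_lt_0_compat; [nra|lra]. }
  intros H symH pV Hn.
  set (V := madd U H) in *.
  destruct (Hex V pV) as [Q [v SV]].
  destruct (core_ident U V P u Q v SU SV) as [I1 I2].
  set (n := fnorm H) in *.
  assert (Hn1 : n < um / 2) by (eapply Rlt_le_trans; [exact Hn|apply Rmin_l]).
  assert (Hn2 : n < eps * um / (4 * (Rabs G + 1))) by (eapply Rlt_le_trans; [exact Hn|apply Rmin_r]).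
  assert (Hn0 : 0 <= n) by apply fnorm_nonneg.
  assert (Hsq : n ^ 2 = sum3 (fun i => sum3 (fun j => wgt P Q i j * (v j - u i)^2))).
  { rewrite <- I2. unfold n. rewrite fnorm_sq. unfold V, inner, mtr, mmul, transp, madd, sum3. ring. }
  assert (Wn : forall i j, 0 <= wgt P Q i j) by (intros; apply pow2_ge_0).
  assert (Hv : forall j, (j < 3)%nat -> um / 2 <= v j).
  { intros j Hj. destruct (Rle_lt_dec (um/2) (v j)) as [ok|bad]; [exact ok|exfalso].
    pose proof (W2_colsum P Q j HP (proj1 SV) Hj) as Cs. fold (wgt P Q 0%nat j) (wgt P Q 1%nat j) (wgt P Q 2%nat j) in Cs.
    unfold sum3 in Cs.
    assert (Hcol : sum3 (fun i => wgt P Q i j * (v j - u i)^2) <= n ^ 2).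
    { rewrite Hsq. unfold sum3.
      assert (Z : forall a b, 0 <= wgt P Q a b * (v b - u a)^2) by (intros; apply Rmult_le_pos; [apply Wn|apply pow2_ge_0]).
      pose proof (Z 0%nat 0%nat); pose proof (Z 0%nat 1%nat); pose proof (Z 0%nat 2%nat);
      pose proof (Z 1%nat 0%nat); pose proof (Z 1%nat 1%nat); pose proof (Z 1%nat 2%nat);
      pose proof (Z 2%nat 0%nat); pose proof (Z 2%nat 1%nat); pose proof (Z 2%nat 2%nat).
      destruct j as [|[|[|j]]]; [| | |lia]; lra. }
    assert (Hlow : (um/2)^2 <= sum3 (fun i => wgt P Q i j * (v j - u i)^2)).
    { unfold sum3.
      assert (forall i, (i < 3)%nat -> wgt P Q i j * (um/2)^2 <= wgt P Q i j * (v j - u i)^2).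
      { intros i Hi. apply Rmult_le_compat_l; [apply Wn|]. pose proof (Humi i Hi). nra. }
      pose proof (H0 0%nat ltac:(lia)); pose proof (H0 1%nat ltac:(lia)); pose proof (H0 2%nat ltac:(lia)).
      assert (Cs' : wgt P Q 0%nat j + wgt P Q 1%nat j + wgt P Q 2%nat j = 1) by exact Cs.
      assert (E : (um/2)^2 = (um/2)^2 * (wgt P Q 0%nat j + wgt P Q 1%nat j + wgt P Q 2%nat j)) by (rewrite Cs'; ring).
      lra. }
    assert (n ^ 2 < (um/2)^2) by (simpl; rewrite !Rmult_1_r; apply Rmult_le_0_lt_compat; lra).
    lra. }
  assert (Hm : 0 < um / 2) by lra.
  assert (Gb : forall i j, (i < 3)%nat -> (j < 3)%nat ->
     0 <= wgt P Q i j * (v j * ln (v j) - v j * ln (u i) - v j + u i) <= wgt P Q i j * ((v j - u i)^2 / (um/2))).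
  { intros i j Hi Hj. destruct (g_bounds (u i) (v j) (um/2) Hm) as [g1 g2].
    - pose proof (Humi i Hi); lra.
    - apply Hv; auto.
    - split; [apply Rmult_le_pos; auto|apply Rmult_le_compat_l; auto]. }
  set (r := inner V (fun i j => mlog V i j - id3 i j) - inner U (fun i j => mlog U i j - id3 i j)
    - (inner (mlog U) V - inner (mlog U) U)).
  assert (Hr : 0 <= r <= n ^ 2 / (um / 2)).
  { unfold r. rewrite I1, Hsq. unfold sum3.
    pose proof (Gb 0%nat 0%nat ltac:(lia) ltac:(lia)); pose proof (Gb 0%nat 1%nat ltac:(lia) ltac:(lia));
    pose proof (Gb 0%nat 2%nat ltac:(lia) ltac:(lia)); pose proof (Gb 1%nat 0%nat ltac:(lia) ltac:(lia));
    pose proof (Gb 1%nat 1%nat ltac:(lia) ltac:(lia)); pose proof (Gb 1%nat 2%nat ltac:(lia) ltac:(lia));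
    pose proof (Gb 2%nat 0%nat ltac:(lia) ltac:(lia)); pose proof (Gb 2%nat 1%nat ltac:(lia) ltac:(lia));
    pose proof (Gb 2%nat 2%nat ltac:(lia) ltac:(lia)).
    unfold Rdiv in *. split; [lra|].
    repeat rewrite Rmult_assoc in *. lra. }
  assert (Id : W0 G V - W0 G U - inner (Tmap G 0 U) H = 2 * G * r).
  { unfold r, W0, V, Tmap, inner, mtr, mmul, transp, madd, sum3. ring. }
  rewrite Id.
  rewrite Rabs_mult, Rabs_mult.
  replace (Rabs 2) with 2 by (rewrite Rabs_right; lra).
  rewrite (Rabs_right r) by lra.
  pose proof (Rabs_pos G).
  assert (r <= 2 * n ^ 2 / um) by (replace (2 * n^2/um) with (n^2/(um/2)) by (field; lra); lra).
  assert (n * (4 * (Rabs G + 1)) <= eps * um).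
  { apply Rlt_le. replace (eps * um) with ((eps * um / (4 * (Rabs G + 1))) * (4 * (Rabs G + 1))) by (field; lra).
    apply Rmult_lt_compat_r; lra. }
  assert (2 * Rabs G * r <= 2 * Rabs G * (2 * n^2 / um)) by (apply Rmult_le_compat_l; lra).
  assert (2 * Rabs G * (2 * n^2 / um) <= eps * n).
  { apply (Rmult_le_reg_r um); [lra|].
    replace (2 * Rabs G * (2 * n ^ 2 / um) * um) with (4 * Rabs G * n * n) by (field; lra).
    assert (n * (4 * Rabs G) <= eps * um) by nra.
    nra. }
  lra.
Qed.

Definition clamp x := Rmax 0 (Rmin 1 x).

Lemma clamp_in x : 0 <= clamp x <= 1.
Proof. unfold clamp, Rmax, Rmin; repeat destruct Rle_dec; lra. Qed.

Lemma clamp_lip a b : Rabs (clamp a - clamp b) <= Rabs (a - b).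
Proof. unfold clamp, Rmax, Rmin; repeat destruct Rle_dec; unfold Rabs; repeat destruct Rcase_abs; lra. Qed.

Lemma clamp_id x : 0 <= x <= 1 -> clamp x = x.
Proof. intros; unfold clamp, Rmax, Rmin; repeat destruct Rle_dec; lra. Qed.

Lemma const01 (g : R -> R) :
  (forall t, 0 <= t <= 1 -> forall eps, 0 < eps -> exists d, 0 < d /\
     forall s, 0 <= t + s <= 1 -> Rabs s < d -> Rabs (g (t + s) - g t) <= eps * Rabs s) ->
  g 1 = g 0.
Proof.
  intros Hg.
  set (h := fun x => g (clamp x)).
  assert (Hd : forall x, derivable_pt_lim h x 0).
  { intros x eps Heps.
    destruct (Hg (clamp x) (clamp_in x) (eps/2) ltac:(lra)) as [d [Hd Hs]].
    exists (mkposreal d Hd). intros hh Hhh Hlt. simpl in Hlt.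
    set (s := clamp (x + hh) - clamp x).
    assert (Hs1 : Rabs s <= Rabs hh) by (unfold s; replace hh with ((x + hh) - x) at 2 by ring; apply clamp_lip).
    assert (Hs2 : 0 <= clamp x + s <= 1) by (unfold s; replace (clamp x + (clamp (x + hh) - clamp x)) with (clamp (x+hh)) by ring; apply clamp_in).
    pose proof (Hs s Hs2 ltac:(lra)) as K.
    unfold h. replace (clamp (x + hh)) with (clamp x + s) by (unfold s; ring).
    assert (Hh0 : 0 < Rabs hh) by (apply Rabs_pos_lt; auto).
    rewrite Rminus_0_r. unfold Rdiv. rewrite Rabs_mult, Rabs_inv.
    apply (Rmult_lt_reg_r (Rabs hh)); [lra|].
    rewrite Rmult_assoc, Rinv_l by lra.
    pose proof (Rabs_pos s). nra. }
  set (pr := fun x => exist (fun l => derivable_pt_lim h x l) 0 (Hd x) : derivable_pt h x).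
  assert (C := null_derivative_1 h pr (fun x => eq_refl)).
  pose proof (C 1 0) as C1. unfold h in C1. rewrite !clamp_id in C1 by lra. exact C1.
Qed.

Definition seg (A D : Mat) (t : R) : Mat := fun i j => A i j + t * D i j.
Definition msc (s : R) (D : Mat) : Mat := fun i j => s * D i j.

Lemma seg_add A D t s : madd (seg A D t) (msc s D) = seg A D (t + s).
Proof. extensionality i; extensionality j; unfold madd, seg, msc; ring. Qed.

Lemma inner_msc T D s : inner T (msc s D) = s * inner T D.
Proof. unfold inner, mtr, mmul, transp, msc, sum3; ring. Qed.

Lemma fnorm_msc D s : fnorm (msc s D) = Rabs s * fnorm D.
Proof.
  unfold fnorm. replace (inner (msc s D) (msc s D)) with (Rsqr s * inner D D)
    by (unfold Rsqr, inner, mtr, mmul, transp, msc, sum3; ring).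
  rewrite sqrt_mult_alt by apply Rle_0_sqr. rewrite sqrt_Rsqr_abs. reflexivity.
Qed.

Lemma sym_msc s D : sym D -> sym (msc s D).
Proof. intros H i j Hi Hj; unfold msc; rewrite H; auto. Qed.

Lemma seg_approx (W : Mat -> R) A D t T :
  sym D -> (forall t, 0 <= t <= 1 -> psym (seg A D t)) -> 0 <= t <= 1 ->
  has_sym_deriv W (seg A D t) T ->
  forall eps, 0 < eps -> exists d, 0 < d /\ forall s, 0 <= t + s <= 1 -> Rabs s < d ->
    Rabs (W (seg A D (t + s)) - W (seg A D t) - s * inner T D) <= eps * Rabs s.
Proof.
  intros sD pS Ht Hder eps Heps.
  assert (Hf : 0 <= fnorm D) by apply fnorm_nonneg.
  destruct (Hder (eps / (fnorm D + 1))) as [d [Hd Hb]].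
  { apply Rdiv_lt_0_compat; lra. }
  exists (d / (fnorm D + 1)). split; [apply Rdiv_lt_0_compat; lra|].
  intros s Hts Hs.
  pose proof (Hb (msc s D) (sym_msc s D sD)) as K.
  rewrite seg_add, fnorm_msc, inner_msc in K.
  assert (Hsd : Rabs s * fnorm D < d).
  { apply Rle_lt_trans with (Rabs s * (fnorm D + 1)).
    - pose proof (Rabs_pos s); nra.
    - apply (Rmult_lt_reg_r (/ (fnorm D + 1))); [apply Rinv_0_lt_compat; lra|].
      rewrite Rmult_assoc, Rinv_r by lra. rewrite Rmult_1_r. exact Hs. }
  specialize (K (pS _ Hts) Hsd).
  eapply Rle_trans; [exact K|].
  replace (eps / (fnorm D + 1) * (Rabs s * fnorm D)) with (eps * Rabs s * (fnorm D / (fnorm D + 1))) by (field; lra).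
  rewrite <- (Rmult_1_r (eps * Rabs s)) at 2.
  apply Rmult_le_compat_l.
  - pose proof (Rabs_pos s); nra.
  - apply (Rmult_le_reg_r (fnorm D + 1)); [lra|]. unfold Rdiv. rewrite Rmult_assoc, Rinv_l by lra. lra.
Qed.

Lemma seg_diff (W1 W2 : Mat -> R) (T : R -> Mat) A D :
  sym D -> (forall t, 0 <= t <= 1 -> psym (seg A D t)) ->
  (forall t, 0 <= t <= 1 -> has_sym_deriv W1 (seg A D t) (T t)) ->
  (forall t, 0 <= t <= 1 -> has_sym_deriv W2 (seg A D t) (T t)) ->
  W1 (seg A D 1) - W1 (seg A D 0) = W2 (seg A D 1) - W2 (seg A D 0).
Proof.
  intros sD pS H1 H2.
  assert (K : (fun t => W1 (seg A D t) - W2 (seg A D t)) 1 = (fun t => W1 (seg A D t) - W2 (seg A D t)) 0).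
  { apply (const01 (fun t => W1 (seg A D t) - W2 (seg A D t))). intros t Ht eps Heps.
    destruct (seg_approx W1 A D t (T t) sD pS Ht (H1 t Ht) (eps/2) ltac:(lra)) as [d1 [Hd1 B1]].
    destruct (seg_approx W2 A D t (T t) sD pS Ht (H2 t Ht) (eps/2) ltac:(lra)) as [d2 [Hd2 B2]].
    exists (Rmin d1 d2). split; [apply Rmin_glb_lt; auto|].
    intros s Hts Hs.
    pose proof (B1 s Hts (Rlt_le_trans _ _ _ Hs (Rmin_l _ _))) as K1.
    pose proof (B2 s Hts (Rlt_le_trans _ _ _ Hs (Rmin_r _ _))) as K2.
    match goal with |- Rabs ?e <= _ =>
      replace e with ((W1 (seg A D (t + s)) - W1 (seg A D t) - s * inner (T t) D)
                     + - (W2 (seg A D (t + s)) - W2 (seg A D t) - s * inner (T t) D)) by ring end.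
    eapply Rle_trans; [apply Rabs_triang|]. rewrite Rabs_Ropp. lra. }
  simpl in K. lra.
Qed.

Lemma seg_F (W : Mat -> R) (T : R -> Mat) A D (F : R -> R) :
  sym D -> (forall t, 0 <= t <= 1 -> psym (seg A D t)) ->
  (forall t, 0 <= t <= 1 -> has_sym_deriv W (seg A D t) (T t)) ->
  (forall t, 0 <= t <= 1 -> derivable_pt_lim F t (inner (T t) D)) ->
  W (seg A D 1) - W (seg A D 0) = F 1 - F 0.
Proof.
  intros sD pS H1 H2.
  assert (K : (fun t => W (seg A D t) - F t) 1 = (fun t => W (seg A D t) - F t) 0).
  { apply (const01 (fun t => W (seg A D t) - F t)). intros t Ht eps Heps.
    destruct (seg_approx W A D t (T t) sD pS Ht (H1 t Ht) (eps/2) ltac:(lra)) as [d1 [Hd1 B1]].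
    destruct (H2 t Ht (eps/2) ltac:(lra)) as [d2 B2].
    exists (Rmin d1 d2). split; [apply Rmin_glb_lt; auto; apply cond_pos|].
    intros s Hts Hs.
    pose proof (B1 s Hts (Rlt_le_trans _ _ _ Hs (Rmin_l _ _))) as K1.
    assert (K2 : Rabs (F (t + s) - F t - s * inner (T t) D) <= eps / 2 * Rabs s).
    { destruct (Req_dec s 0) as [Z|NZ].
      - subst s. rewrite Rplus_0_r, Rabs_R0. replace (F t - F t - 0 * inner (T t) D) with 0 by ring.
        rewrite Rabs_R0; lra.
      - pose proof (B2 s NZ (Rlt_le_trans _ _ _ Hs (Rmin_r _ _))) as K.
        replace (F (t + s) - F t - s * inner (T t) D) with (s * ((F (t + s) - F t) / s - inner (T t) D))
          by (field; auto).
        rewrite Rabs_mult. rewrite Rmult_comm. apply Rmult_le_compat_r; [apply Rabs_pos|lra]. }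
    match goal with |- Rabs ?e <= _ =>
      replace e with ((W (seg A D (t + s)) - W (seg A D t) - s * inner (T t) D)
                     + - (F (t + s) - F t - s * inner (T t) D)) by ring end.
    eapply Rle_trans; [apply Rabs_triang|]. rewrite Rabs_Ropp. lra. }
  simpl in K. lra.
Qed.

Definition dl (a b : R) (i : nat) : R := match i with 0%nat => a | 1%nat => b | _ => 1 end.
Definition dg a b : Mat := diag3 (dl a b).
Definition Ea (al : R) : Mat := diag3 (fun i => match i with 0%nat => al | _ => 0 end).
Definition Eb (be : R) : Mat := diag3 (fun i => match i with 1%nat => be | _ => 0 end).

Lemma seg_dg_a a0 b0 al t : seg (dg a0 b0) (Ea al) t = dg (a0 + al * t) b0.
Proof.
  extensionality i; extensionality j; unfold seg, dg, Ea, diag3.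
  destruct (Nat.eqb i j); [destruct i as [|[|i]]; simpl; ring|ring].
Qed.
Lemma seg_dg_b a0 b0 be t : seg (dg a0 b0) (Eb be) t = dg a0 (b0 + be * t).
Proof.
  extensionality i; extensionality j; unfold seg, dg, Eb, diag3.
  destruct (Nat.eqb i j); [destruct i as [|[|i]]; simpl; ring|ring].
Qed.

Lemma orth_id3 : orth id3.
Proof. unfold orth; idx3; unfold mmul, transp, id3, sum3; simpl; ring. Qed.

Lemma spectral_dg a b : 0 < a -> 0 < b -> spectral (dg a b) id3 (dl a b).
Proof.
  intros Ha Hb. split; [apply orth_id3|split].
  - intros i Hi; destruct i as [|[|[|i]]]; simpl; lra || lia.
  - unfold dg; idx3; unfold mmul, transp, id3, diag3, sum3; simpl; ring.
Qed.

Lemma psym_dg a b : 0 < a -> 0 < b -> psym (dg a b).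
Proof.
  intros Ha Hb. split.
  - unfold dg, sym; idx3; reflexivity.
  - intros x Hx. unfold dg, diag3, sum3; simpl.
    replace (x 0%nat * a * x 0%nat + x 0%nat * 0 * x 1%nat + x 0%nat * 0 * x 2%nat +
      (x 1%nat * 0 * x 0%nat + x 1%nat * b * x 1%nat + x 1%nat * 0 * x 2%nat) +
      (x 2%nat * 0 * x 0%nat + x 2%nat * 0 * x 1%nat + x 2%nat * 1 * x 2%nat))
      with (a * (x 0%nat * x 0%nat) + b * (x 1%nat * x 1%nat) + x 2%nat * x 2%nat) by ring.
    pose proof (Rle_0_sqr (x 0%nat)); pose proof (Rle_0_sqr (x 1%nat)); pose proof (Rle_0_sqr (x 2%nat)).
    unfold Rsqr in *.
    destruct (Req_dec (x 0%nat) 0) as [z0|z0];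
    [destruct (Req_dec (x 1%nat) 0) as [z1|z1];
     [destruct (Req_dec (x 2%nat) 0) as [z2|z2]|]|].
    + exfalso; auto.
    + assert (0 < x 2%nat * x 2%nat) by (apply Rsqr_pos_lt; auto). nra.
    + assert (0 < x 1%nat * x 1%nat) by (apply Rsqr_pos_lt; auto). nra.
    + assert (0 < x 0%nat * x 0%nat) by (apply Rsqr_pos_lt; auto). nra.
Qed.

Lemma mlog_dg a b : 0 < a -> 0 < b ->
  mlog (dg a b) 0%nat 0%nat = ln a /\ mlog (dg a b) 1%nat 1%nat = ln b /\ mlog (dg a b) 2%nat 2%nat = 0.
Proof.
  intros Ha Hb. pose proof (mlog_sdiag _ _ _ (spectral_dg a b Ha Hb)) as M.
  rewrite (M 0%nat 0%nat), (M 1%nat 1%nat), (M 2%nat 2%nat) by lia.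
  unfold sdiag, mmul, transp, diag3, id3, sum3; simpl. rewrite ln_1. repeat split; ring.
Qed.

Definition phi (x : R) := x * ln x - x.

Lemma phi_deriv x : 0 < x -> derivable_pt_lim phi x (ln x).
Proof.
  intros Hx.
  assert (D : derivable_pt_lim ((id * ln) - id)%F x ((1 * ln x + x * / x) - 1)).
  { apply derivable_pt_lim_minus.
    - apply (derivable_pt_lim_mult id ln). apply derivable_pt_lim_id. apply derivable_pt_lim_ln; auto.
    - apply derivable_pt_lim_id. }
  replace (ln x) with ((1 * ln x + x * / x) - 1) by (field; lra).
  exact D.
Qed.

Lemma dpl_eq f x l l' : l' = l -> derivable_pt_lim f x l' -> derivable_pt_lim f x l.
Proof. intros ->; auto. Qed.

Lemma F_deriv c a0 al k t : 0 < a0 + al * t ->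
  derivable_pt_lim (fun t => c * phi (a0 + al * t) + k * t) t (al * (c * ln (a0 + al * t)) + k).
Proof.
  intros Hp.
  assert (D1 : derivable_pt_lim (fun t => a0 + al * t) t al).
  { apply (dpl_eq _ _ _ (0 + al * 1)); [ring|].
    exact (derivable_pt_lim_plus (fct_cte a0) (mult_real_fct al id) t 0 (al * 1)
      (derivable_pt_lim_const a0 t) (derivable_pt_lim_scal id al t 1 (derivable_pt_lim_id t))). }
  assert (D2 : derivable_pt_lim (fun t => phi (a0 + al * t)) t (ln (a0 + al * t) * al)).
  { exact (derivable_pt_lim_comp (fun t => a0 + al * t) phi t al (ln (a0 + al * t)) D1 (phi_deriv _ Hp)). }
  apply (dpl_eq _ _ _ (c * (ln (a0 + al * t) * al) + k * 1)); [ring|].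
  exact (derivable_pt_lim_plus (mult_real_fct c (fun t => phi (a0 + al * t))) (mult_real_fct k id) t _ _
     (derivable_pt_lim_scal _ c t _ D2) (derivable_pt_lim_scal id k t 1 (derivable_pt_lim_id t))).
Qed.

Section Edges.
Variables (G Lam : R) (W : Mat -> R).
Hypothesis HW : forall U, psym U -> has_sym_deriv W U (Tmap G Lam U).

Lemma edge_a a0 b0 al : 0 < a0 -> 0 < b0 -> 0 <= al ->
  W (dg (a0 + al) b0) - W (dg a0 b0) =
  (2 * G + Lam) * (phi (a0 + al) - phi a0) + Lam * al * ln b0.
Proof.
  intros Ha Hb Hal.
  pose proof (seg_F W (fun t => Tmap G Lam (seg (dg a0 b0) (Ea al) t)) (dg a0 b0) (Ea al)
    (fun t => (2 * G + Lam) * phi (a0 + al * t) + (Lam * al * ln b0) * t)) as K.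
  rewrite !seg_dg_a in K. rewrite Rmult_1_r, Rmult_0_r, Rplus_0_r in K.
  rewrite K; [ring| | | |].
  - unfold Ea, sym; idx3; reflexivity.
  - intros t Ht. rewrite seg_dg_a. apply psym_dg; nra.
  - intros t Ht. rewrite seg_dg_a. apply HW, psym_dg; nra.
  - intros t Ht. rewrite seg_dg_a.
    assert (Hp : 0 < a0 + al * t) by nra.
    destruct (mlog_dg _ _ Hp Hb) as [m0 [m1 m2]].
    replace (inner (Tmap G Lam (dg (a0 + al * t) b0)) (Ea al))
      with (al * (2 * G * ln (a0 + al * t) + Lam * (ln (a0 + al * t) + ln b0))).
    + replace (al * (2 * G * ln (a0 + al * t) + Lam * (ln (a0 + al * t) + ln b0)))
        with (al * ((2 * G + Lam) * ln (a0 + al * t)) + Lam * al * ln b0) by ring.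
      apply F_deriv; auto.
    + unfold inner, mtr, mmul, transp, Ea, Tmap, mtr, diag3, id3, sum3; simpl.
      rewrite m0, m1, m2. ring.
Qed.

Lemma edge_b a0 b0 be : 0 < a0 -> 0 < b0 -> 0 <= be ->
  W (dg a0 (b0 + be)) - W (dg a0 b0) =
  (2 * G + Lam) * (phi (b0 + be) - phi b0) + Lam * be * ln a0.
Proof.
  intros Ha Hb Hbe.
  pose proof (seg_F W (fun t => Tmap G Lam (seg (dg a0 b0) (Eb be) t)) (dg a0 b0) (Eb be)
    (fun t => (2 * G + Lam) * phi (b0 + be * t) + (Lam * be * ln a0) * t)) as K.
  rewrite !seg_dg_b in K. rewrite Rmult_1_r, Rmult_0_r, Rplus_0_r in K.
  rewrite K; [ring| | | |].
  - unfold Eb, sym; idx3; reflexivity.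
  - intros t Ht. rewrite seg_dg_b. apply psym_dg; nra.
  - intros t Ht. rewrite seg_dg_b. apply HW, psym_dg; nra.
  - intros t Ht. rewrite seg_dg_b.
    assert (Hp : 0 < b0 + be * t) by nra.
    destruct (mlog_dg _ _ Ha Hp) as [m0 [m1 m2]].
    replace (inner (Tmap G Lam (dg a0 (b0 + be * t))) (Eb be))
      with (be * (2 * G * ln (b0 + be * t) + Lam * (ln a0 + ln (b0 + be * t)))).
    + replace (be * (2 * G * ln (b0 + be * t) + Lam * (ln a0 + ln (b0 + be * t))))
        with (be * ((2 * G + Lam) * ln (b0 + be * t)) + Lam * be * ln a0) by ring.
      apply F_deriv; auto.
    + unfold inner, mtr, mmul, transp, Eb, Tmap, mtr, diag3, id3, sum3; simpl.
      rewrite m0, m1, m2. ring.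
Qed.

Lemma Lam_zero : Lam = 0.
Proof.
  pose proof (edge_a 1 1 1 ltac:(lra) ltac:(lra) ltac:(lra)) as e1.
  pose proof (edge_b 2 1 2 ltac:(lra) ltac:(lra) ltac:(lra)) as e2.
  pose proof (edge_b 1 1 2 ltac:(lra) ltac:(lra) ltac:(lra)) as e3.
  pose proof (edge_a 1 3 1 ltac:(lra) ltac:(lra) ltac:(lra)) as e4.
  replace (1 + 1) with 2 in * by ring. replace (1 + 2) with 3 in * by ring.
  rewrite ln_1 in *.
  assert (Lam * (2 * ln 2 - ln 3) = 0) by lra.
  assert (ln 3 < 2 * ln 2).
  { replace (2 * ln 2) with (ln (2 * 2)) by (rewrite ln_mult; lra).
    apply ln_increasing; lra. }
  apply Rmult_integral in H. destruct H; lra.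
Qed.
End Edges.

Lemma spectral_id3 : spectral id3 id3 (fun _ => 1).
Proof.
  split; [apply orth_id3|split].
  - intros; lra.
  - idx3; unfold mmul, transp, id3, diag3, sum3; simpl; ring.
Qed.

Lemma W0_id3 G : W0 G id3 = 0.
Proof.
  unfold W0. rewrite (W0_val _ _ _ spectral_id3). unfold sum3. rewrite ln_1. ring.
Qed.

Lemma psym_seg U t : psym U -> 0 <= t <= 1 -> psym (seg id3 (fun i j => U i j - id3 i j) t).
Proof.
  intros [sU pU] Ht. split.
  - intros i j Hi Hj. unfold seg. rewrite (sU i j Hi Hj).
    replace (id3 i j) with (id3 j i); [reflexivity|].
    unfold id3. rewrite Nat.eqb_sym. reflexivity.
  - intros x Hx. specialize (pU x Hx).
    assert (Hs : 0 < x 0%nat * x 0%nat + x 1%nat * x 1%nat + x 2%nat * x 2%nat).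
    { pose proof (Rle_0_sqr (x 0%nat)); pose proof (Rle_0_sqr (x 1%nat)); pose proof (Rle_0_sqr (x 2%nat)).
      unfold Rsqr in *.
      destruct (Req_dec (x 0%nat) 0) as [z0|z0];
      [destruct (Req_dec (x 1%nat) 0) as [z1|z1];
       [destruct (Req_dec (x 2%nat) 0) as [z2|z2]|]|].
      + exfalso; auto.
      + assert (0 < x 2%nat * x 2%nat) by (apply Rsqr_pos_lt; auto). lra.
      + assert (0 < x 1%nat * x 1%nat) by (apply Rsqr_pos_lt; auto). lra.
      + assert (0 < x 0%nat * x 0%nat) by (apply Rsqr_pos_lt; auto). lra. }
    set (q := sum3 (fun i => sum3 (fun j => x i * U i j * x j))) in *.
    replace (sum3 (fun i => sum3 (fun j => x i * seg id3 (fun i0 j0 => U i0 j0 - id3 i0 j0) t i j * x j)))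
      with ((1 - t) * (x 0%nat * x 0%nat + x 1%nat * x 1%nat + x 2%nat * x 2%nat) + t * q)
      by (unfold q, seg, id3, sum3; simpl; ring).
    destruct (Rle_lt_dec t 0); nra.
Qed.

Section Main.
Hypothesis Hex : forall U, psym U -> exists Q l, spectral U Q l.

Theorem main_cond (G Lam : R) (hG : G <> 0) :
  ((exists W : Mat -> R,
      forall U, psym U -> has_sym_deriv W U (Tmap G Lam U)) <-> Lam = 0) /\
  (Lam = 0 ->
   forall W : Mat -> R,
     (forall U, psym U -> has_sym_deriv W U (Tmap G Lam U)) ->
     W id3 = 0 ->
     forall U, psym U ->
       W U = 2 * G * (inner U (fun i j => mlog U i j - id3 i j) + 3) /\
       (forall Q l, spectral U Q l ->
          W U = 2 * G * sum3 (fun i => l i * (ln (l i) - 1)) + 6 * G)).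
Proof.
  split.
  - split.
    + intros [W HW]. exact (Lam_zero G Lam W HW).
    + intros ->. exists (W0 G). intros U pU. apply W0_deriv; auto.
  - intros -> W HW HW1 U pU.
    assert (K := seg_diff W (W0 G) (fun t => Tmap G 0 (seg id3 (fun i j => U i j - id3 i j) t))
                  id3 (fun i j => U i j - id3 i j)).
    assert (E1 : seg id3 (fun i j => U i j - id3 i j) 1 = U)
      by (extensionality i; extensionality j; unfold seg; ring).
    assert (E0 : seg id3 (fun i j => U i j - id3 i j) 0 = id3)
      by (extensionality i; extensionality j; unfold seg; ring).
    rewrite E1, E0, HW1, W0_id3 in K.
    assert (WU : W U = W0 G U).
    { assert (W U - 0 = W0 G U - 0); [|lra]. apply K.
      - intros i j Hi Hj. destruct pU as [sU _]. rewrite (sU i j Hi Hj).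
        unfold id3. rewrite Nat.eqb_sym. reflexivity.
      - intros t Ht. apply psym_seg; auto.
      - intros t Ht. apply HW. apply psym_seg; auto.
      - intros t Ht. apply W0_deriv; auto. apply psym_seg; auto. }
    split.
    + rewrite WU. reflexivity.
    + intros Q l S. rewrite WU. unfold W0. rewrite (W0_val _ _ _ S). ring.
Qed.
End Main.

Lemma cubic_root p q r : exists x, x^3 + p * x^2 + q * x + r = 0.
Proof.
  set (K := 1 + Rabs p + Rabs q + Rabs r).
  pose proof (Rabs_pos p); pose proof (Rabs_pos q); pose proof (Rabs_pos r).
  pose proof (Rle_abs p); pose proof (Rle_abs q); pose proof (Rle_abs r).
  pose proof (Rabs_Ropp p); pose proof (Rle_abs (-p)); pose proof (Rabs_Ropp q); pose proof (Rle_abs (-q)); pose proof (Rabs_Ropp r); pose proof (Rle_abs (-r)).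
  assert (HK : 1 <= K) by (unfold K; lra).
  assert (HK2 : K <= K^2) by nra.
  set (f := fun x => x^3 + p * x^2 + q * x + r).
  assert (Hc : continuity f) by (unfold f; reg).
  assert (f1 : 0 < f K).
  { unfold f.
    assert (p * K^2 >= - Rabs p * K^2) by nra.
    assert (q * K >= - Rabs q * K^2) by nra.
    assert (r >= - Rabs r * K^2) by nra.
    assert (K^3 = K * K^2) by ring.
    assert (K^3 - (Rabs p + Rabs q + Rabs r) * K^2 = K^2) by (replace (Rabs p + Rabs q + Rabs r) with (K - 1) by (unfold K; ring); ring).
    nra. }
  assert (f2 : f (- K) < 0).
  { unfold f.
    assert (p * (-K)^2 <= Rabs p * K^2) by nra.
    assert (q * (-K) <= Rabs q * K^2) by nra.
    assert (r <= Rabs r * K^2) by nra.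
    assert ((-K)^3 = - (K * K^2)) by ring.
    assert (K^3 - (Rabs p + Rabs q + Rabs r) * K^2 = K^2) by (replace (Rabs p + Rabs q + Rabs r) with (K - 1) by (unfold K; ring); ring).
    nra. }
  destruct (IVT f (-K) K Hc ltac:(lra) f2 f1) as [x [_ Hx]].
  exists x. exact Hx.
Qed.

Lemma kernel3 a b c d e f :
  a * (d * f - e * e) - b * (b * f - e * c) + c * (b * e - d * c) = 0 ->
  exists x0 x1 x2, ~ (x0 = 0 /\ x1 = 0 /\ x2 = 0) /\
    a * x0 + b * x1 + c * x2 = 0 /\ b * x0 + d * x1 + e * x2 = 0 /\ c * x0 + e * x1 + f * x2 = 0.
Proof.
  intros Hd.
  destruct (classic (d * f - e * e = 0 /\ c * e - b * f = 0 /\ b * e - c * d = 0)) as [Z0|NZ].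
  2:{ exists (d * f - e * e), (c * e - b * f), (b * e - c * d). split; [exact NZ|]. repeat split; lra. }
  destruct (classic (c * e - b * f = 0 /\ a * f - c * c = 0 /\ b * c - a * e = 0)) as [Z1|NZ].
  2:{ exists (c * e - b * f), (a * f - c * c), (b * c - a * e). split; [exact NZ|]. repeat split; lra. }
  destruct (classic (b * e - c * d = 0 /\ b * c - a * e = 0 /\ a * d - b * b = 0)) as [Z2|NZ].
  2:{ exists (b * e - c * d), (b * c - a * e), (a * d - b * b). split; [exact NZ|]. repeat split; lra. }
  destruct Z0 as [z00 [z01 z02]]. destruct Z1 as [_ [z11 z12]]. destruct Z2 as [_ [_ z22]].
  destruct (classic (- c = 0 /\ 0 = 0 /\ a = 0)) as [Y1|NZ].
  2:{ exists (-c), 0, a. split; [exact NZ|]. repeat split; lra. }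
  destruct (classic (0 = 0 /\ - e = 0 /\ d = 0)) as [Y2|NZ].
  2:{ exists 0, (-e), d. split; [exact NZ|]. repeat split; lra. }
  destruct (classic (d = 0 /\ - b = 0 /\ 0 = 0)) as [Y3|NZ].
  2:{ exists d, (-b), 0. split; [exact NZ|]. repeat split; lra. }
  destruct (classic (f = 0 /\ 0 = 0 /\ - c = 0)) as [Y4|NZ].
  2:{ exists f, 0, (-c). split; [exact NZ|]. repeat split; lra. }
  exists 1, 0, 0. split; [lra|]. repeat split; lra.
Qed.

Lemma rot2 al be ga : exists c s, c * c + s * s = 1 /\
  - (c * s * al) + (c * c - s * s) * be + c * s * ga = 0.
Proof.
  destruct (Req_dec be 0) as [Z|NZ].
  - exists 1, 0. subst. split; ring.
  - set (y := (ga - al) / 2 + sqrt (((al - ga) / 2) ^ 2 + be ^ 2)).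
    assert (Hs : 0 <= ((al - ga) / 2) ^ 2 + be ^ 2) by (pose proof (pow2_ge_0 ((al - ga) / 2)); pose proof (pow2_ge_0 be); lra).
    assert (Hy : y * y + (al - ga) * y - be * be = 0).
    { pose proof (sqrt_sqrt _ Hs) as S.
      unfold y. set (r := sqrt (((al - ga) / 2) ^ 2 + be ^ 2)) in *. nra. }
    assert (Hn : 0 < be * be + y * y) by (pose proof (Rle_0_sqr y); unfold Rsqr in *; assert (0 < be * be) by (apply Rsqr_pos_lt; auto); lra).
    set (n := sqrt (be * be + y * y)).
    assert (Hn2 : n * n = be * be + y * y) by (apply sqrt_sqrt; lra).
    assert (Hn0 : n <> 0) by (intro Z; rewrite Z in Hn2; lra).
    exists (be / n), (y / n). split.
    + replace (be / n * (be / n) + y / n * (y / n)) with ((be * be + y * y) / (n * n)) by (field; auto). rewrite <- Hn2. field. auto.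
    + replace (- (be / n * (y / n) * al) + (be / n * (be / n) - y / n * (y / n)) * be + be / n * (y / n) * ga)
        with (- be * (y * y + (al - ga) * y - be * be) / (n * n)) by (field; auto).
      rewrite Hy. field. auto.
Qed.

Lemma frame v0 v1 v2 : v0 * v0 + v1 * v1 + v2 * v2 = 1 ->
  exists w0 w1 w2, w0 * w0 + w1 * w1 + w2 * w2 = 1 /\ v0 * w0 + v1 * w1 + v2 * w2 = 0.
Proof.
  intros Hv.
  destruct (Req_dec (v1 * v1 + v2 * v2) 0) as [Z|NZ].
  - exists 0, 1, 0. assert (v1 = 0) by nra. subst. split; ring.
  - assert (P : 0 < v1 * v1 + v2 * v2) by (pose proof (Rle_0_sqr v1); pose proof (Rle_0_sqr v2); unfold Rsqr in *; lra).
    set (n := sqrt (v1 * v1 + v2 * v2)).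
    assert (Hn2 : n * n = v1 * v1 + v2 * v2) by (apply sqrt_sqrt; lra).
    assert (Hn0 : n <> 0) by (intro Z; rewrite Z in Hn2; lra).
    exists 0, (v2 / n), (- v1 / n). split.
    + replace (0 * 0 + v2 / n * (v2 / n) + - v1 / n * (- v1 / n)) with ((v1 * v1 + v2 * v2) / (n * n)) by (field; auto).
      rewrite Hn2. field. lra.
    + field. auto.
Qed.

Definition mk3 (a00 a01 a02 a10 a11 a12 a20 a21 a22 : R) : Mat :=
  fun i j => match i, j with
  | O, O => a00 | O, S O => a01 | O, S (S O) => a02
  | S O, O => a10 | S O, S O => a11 | S O, S (S O) => a12
  | S (S O), O => a20 | S (S O), S O => a21 | S (S O), S (S O) => a22
  | _, _ => 0 end.

Definition dl3 (x y z : R) (i : nat) : R := match i with 0%nat => x | 1%nat => y | _ => z end.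

Lemma rot_block (Bm : Mat) lam c s :
  Bm 0%nat 0%nat = lam -> Bm 0%nat 1%nat = 0 -> Bm 0%nat 2%nat = 0 -> Bm 1%nat 0%nat = 0 -> Bm 2%nat 0%nat = 0 ->
  Bm 2%nat 1%nat = Bm 1%nat 2%nat ->
  c * c + s * s = 1 ->
  - (c * s * Bm 1%nat 1%nat) + (c * c - s * s) * Bm 1%nat 2%nat + c * s * Bm 2%nat 2%nat = 0 ->
  meq (mmul (mmul (transp (mk3 1 0 0 0 c (-s) 0 s c)) Bm) (mk3 1 0 0 0 c (-s) 0 s c))
      (diag3 (dl3 lam (c * c * Bm 1%nat 1%nat + 2 * c * s * Bm 1%nat 2%nat + s * s * Bm 2%nat 2%nat)
                      (s * s * Bm 1%nat 1%nat - 2 * c * s * Bm 1%nat 2%nat + c * c * Bm 2%nat 2%nat))).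
Proof.
  intros b00 b01 b02 b10 b20 b21 hcs hoff.
  idx3; unfold mmul, transp, mk3, diag3, dl3, sum3; simpl; rewrite ?b00, ?b01, ?b02, ?b10, ?b20, ?b21;
  try ring.
  all: (etransitivity; [|exact hoff]); ring.
Qed.

Lemma orth_rot c s : c * c + s * s = 1 -> orth (mk3 1 0 0 0 c (-s) 0 s c).
Proof.
  intros h. unfold orth; idx3; unfold mmul, transp, mk3, id3, sum3; simpl; try ring; lra.
Qed.

Lemma orth_frame v0 v1 v2 w0 w1 w2 :
  v0 * v0 + v1 * v1 + v2 * v2 = 1 -> w0 * w0 + w1 * w1 + w2 * w2 = 1 -> v0 * w0 + v1 * w1 + v2 * w2 = 0 ->
  orth (mk3 v0 w0 (v1 * w2 - v2 * w1) v1 w1 (v2 * w0 - v0 * w2) v2 w2 (v0 * w1 - v1 * w0)).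
Proof.
  intros hv hw hvw. unfold orth; idx3; unfold mmul, transp, mk3, id3, sum3; simpl;
  try lra; try ring.
  transitivity ((v0 * v0 + v1 * v1 + v2 * v2) * (w0 * w0 + w1 * w1 + w2 * w2) - (v0 * w0 + v1 * w1 + v2 * w2)^2);
  [ring | rewrite hv, hw, hvw; ring].
Qed.

Lemma sym_conj U Q : sym U -> sym (mmul (mmul (transp Q) U) Q).
Proof.
  intros sU i j Hi Hj. unfold mmul, transp, sum3.
  rewrite (sU 1%nat 0%nat), (sU 2%nat 0%nat), (sU 2%nat 1%nat) by lia. ring.
Qed.

Lemma spectral_pos U Q l : psym U -> orth Q -> meq (mmul (mmul (transp Q) U) Q) (diag3 l) ->
  forall i, (i < 3)%nat -> 0 < l i.
Proof.
  intros [_ qU] HQ HD i Hi.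
  assert (E : l i = sum3 (fun a => sum3 (fun b => Q a i * U a b * Q b i))).
  { pose proof (HD i i Hi Hi) as K. unfold diag3 in K. rewrite Nat.eqb_refl in K. rewrite <- K.
    unfold mmul, transp, sum3; ring. }
  rewrite E. apply (qU (fun a => Q a i)).
  intros [z0 [z1 z2]]. pose proof (HQ i i Hi Hi) as K.
  unfold mmul, transp, sum3, id3 in K. rewrite Nat.eqb_refl in K.
  rewrite z0, z1, z2 in K. lra.
Qed.

Lemma spectral_exists U : psym U -> exists Q l, spectral U Q l.
Proof.
  intros pU. pose proof pU as [sU qU].
  set (a := U 0%nat 0%nat). set (b := U 0%nat 1%nat). set (c := U 0%nat 2%nat).
  set (d := U 1%nat 1%nat). set (e := U 1%nat 2%nat). set (f := U 2%nat 2%nat).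
  assert (s10 : U 1%nat 0%nat = b) by (apply sU; lia).
  assert (s20 : U 2%nat 0%nat = c) by (apply sU; lia).
  assert (s21 : U 2%nat 1%nat = e) by (apply sU; lia).
  destruct (cubic_root (-(a + d + f)) (a * d + a * f + d * f - b * b - c * c - e * e)
     (-(a * (d * f - e * e) - b * (b * f - e * c) + c * (b * e - d * c)))) as [lam Hl].
  destruct (kernel3 (a - lam) b c (d - lam) e (f - lam)) as [x0 [x1 [x2 [Hx [k0 [k1 k2]]]]]].
  { transitivity (- (lam ^ 3 + - (a + d + f) * lam ^ 2 + (a * d + a * f + d * f - b * b - c * c - e * e) * lam +
      - (a * (d * f - e * e) - b * (b * f - e * c) + c * (b * e - d * c)))); [ring|rewrite Hl; ring]. }
  assert (Hxx : 0 < x0 * x0 + x1 * x1 + x2 * x2).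
  { pose proof (Rle_0_sqr x0); pose proof (Rle_0_sqr x1); pose proof (Rle_0_sqr x2). unfold Rsqr in *.
    destruct (Req_dec x0 0) as [z0|z0];
    [destruct (Req_dec x1 0) as [z1|z1];
     [destruct (Req_dec x2 0) as [z2|z2]|]|].
    + exfalso; auto.
    + assert (0 < x2 * x2) by (apply Rsqr_pos_lt; auto). lra.
    + assert (0 < x1 * x1) by (apply Rsqr_pos_lt; auto). lra.
    + assert (0 < x0 * x0) by (apply Rsqr_pos_lt; auto). lra. }
  set (n := sqrt (x0 * x0 + x1 * x1 + x2 * x2)).
  assert (Hn2 : n * n = x0 * x0 + x1 * x1 + x2 * x2) by (apply sqrt_sqrt; lra).
  assert (Hn0 : n <> 0) by (intro Z; rewrite Z in Hn2; lra).
  set (v0 := x0 / n). set (v1 := x1 / n). set (v2 := x2 / n).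
  assert (hv : v0 * v0 + v1 * v1 + v2 * v2 = 1).
  { unfold v0, v1, v2. replace (x0 / n * (x0 / n) + x1 / n * (x1 / n) + x2 / n * (x2 / n))
      with ((x0 * x0 + x1 * x1 + x2 * x2) / (n * n)) by (field; auto). rewrite Hn2. field. lra. }
  assert (r0 : a * v0 + b * v1 + c * v2 - lam * v0 = 0).
  { unfold v0, v1, v2. transitivity (((a - lam) * x0 + b * x1 + c * x2) / n); [field; auto|rewrite k0; field; auto]. }
  assert (r1 : b * v0 + d * v1 + e * v2 - lam * v1 = 0).
  { unfold v0, v1, v2. transitivity ((b * x0 + (d - lam) * x1 + e * x2) / n); [field; auto|rewrite k1; field; auto]. }
  assert (r2 : c * v0 + e * v1 + f * v2 - lam * v2 = 0).
  { unfold v0, v1, v2. transitivity ((c * x0 + e * x1 + (f - lam) * x2) / n); [field; auto|rewrite k2; field; auto]. }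
  clearbody v0 v1 v2.
  destruct (frame v0 v1 v2 hv) as [w0 [w1 [w2 [hw hvw]]]].
  set (Q1 := mk3 v0 w0 (v1 * w2 - v2 * w1) v1 w1 (v2 * w0 - v0 * w2) v2 w2 (v0 * w1 - v1 * w0)).
  assert (HQ1 : orth Q1) by (apply orth_frame; auto).
  set (Bm := mmul (mmul (transp Q1) U) Q1).
  assert (sB : sym Bm) by (apply sym_conj; auto).
  assert (b00 : Bm 0%nat 0%nat = lam).
  { unfold Bm, Q1, mmul, transp, mk3, sum3; simpl. fold a b c d e f. rewrite s10, s20, s21.
    transitivity (v0 * (a * v0 + b * v1 + c * v2 - lam * v0) + v1 * (b * v0 + d * v1 + e * v2 - lam * v1)
      + v2 * (c * v0 + e * v1 + f * v2 - lam * v2) + lam * (v0 * v0 + v1 * v1 + v2 * v2)); [ring|].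
    rewrite r0, r1, r2, hv. ring. }
  assert (b10 : Bm 1%nat 0%nat = 0).
  { unfold Bm, Q1, mmul, transp, mk3, sum3; simpl. fold a b c d e f. rewrite s10, s20, s21.
    transitivity (w0 * (a * v0 + b * v1 + c * v2 - lam * v0) + w1 * (b * v0 + d * v1 + e * v2 - lam * v1)
      + w2 * (c * v0 + e * v1 + f * v2 - lam * v2) + lam * (v0 * w0 + v1 * w1 + v2 * w2)); [ring|].
    rewrite r0, r1, r2, hvw. ring. }
  assert (b20 : Bm 2%nat 0%nat = 0).
  { unfold Bm, Q1, mmul, transp, mk3, sum3; simpl. fold a b c d e f. rewrite s10, s20, s21.
    transitivity ((v1 * w2 - v2 * w1) * (a * v0 + b * v1 + c * v2 - lam * v0)
      + (v2 * w0 - v0 * w2) * (b * v0 + d * v1 + e * v2 - lam * v1)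
      + (v0 * w1 - v1 * w0) * (c * v0 + e * v1 + f * v2 - lam * v2)); [ring|].
    rewrite r0, r1, r2. ring. }
  assert (b01 : Bm 0%nat 1%nat = 0) by (rewrite sB by lia; auto).
  assert (b02 : Bm 0%nat 2%nat = 0) by (rewrite sB by lia; auto).
  assert (b21 : Bm 2%nat 1%nat = Bm 1%nat 2%nat) by (apply sB; lia).
  destruct (rot2 (Bm 1%nat 1%nat) (Bm 1%nat 2%nat) (Bm 2%nat 2%nat)) as [cc [ss [hcs hoff]]].
  pose proof (rot_block Bm lam cc ss b00 b01 b02 b10 b20 b21 hcs hoff) as RB.
  set (Q2 := mk3 1 0 0 0 cc (-ss) 0 ss cc) in *.
  set (l := dl3 lam _ _) in RB.
  assert (HQ2 : orth Q2) by (apply orth_rot; auto).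
  exists (mmul Q1 Q2), l.
  assert (HD : meq (mmul (mmul (transp (mmul Q1 Q2)) U) (mmul Q1 Q2)) (diag3 l)).
  { replace (mmul (mmul (transp (mmul Q1 Q2)) U) (mmul Q1 Q2)) with (mmul (mmul (transp Q2) Bm) Q2); auto.
    unfold Bm. rewrite transp_mmul, !mmul_assoc. reflexivity. }
  assert (HQ : orth (mmul Q1 Q2)).
  { unfold orth. rewrite transp_mmul, !mmul_assoc.
    eapply meq_trans; [apply meq_mmul_l; apply cancel_l; exact HQ1|]. exact HQ2. }
  split; [exact HQ|split].
  - apply (spectral_pos U (mmul Q1 Q2)); auto.
  - set (Q := mmul Q1 Q2) in *.
    apply meq_sym.
    eapply meq_trans. { apply meq_mmul_r. apply meq_mmul_l. apply meq_sym. exact HD. }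
    rewrite !mmul_assoc.
    eapply meq_trans. { apply cancel_l'. exact HQ. }
    eapply meq_trans. { apply meq_mmul_l. apply orth_rinv. exact HQ. }
    apply mmul_id_r.
Qed.

Theorem mainTheorem13 (G Lam : R) (hG : G <> 0) :
  ((exists W : Mat -> R,
      forall U, psym U -> has_sym_deriv W U (Tmap G Lam U)) <-> Lam = 0) /\
  (Lam = 0 ->
   forall W : Mat -> R,
     (forall U, psym U -> has_sym_deriv W U (Tmap G Lam U)) ->
     W id3 = 0 ->
     forall U, psym U ->
       W U = 2 * G * (inner U (fun i j => mlog U i j - id3 i j) + 3) /\
       (forall Q l, spectral U Q l ->
          W U = 2 * G * sum3 (fun i => l i * (ln (l i) - 1)) + 6 * G)).
Proof.
  exact (main_cond spectral_exists G Lam hG).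
Qed.
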